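(* Let $p,q\in\mathbb{N}$ with $2\le q\le \frac p2-1$. If $\overline{\xi_f}(E_{p/(q-1)})=\frac{p}{q-1}$ and $\overline{\xi_f}(E_{p/(q+1)})=\frac{p}{q+1}$, then $\overline{\xi_f}(E_{p/q})=\frac pq$.
   Context: For $p,k\in\mathbb{N}$ with $p/k\ge2$, the fraction graph $E_{p/k}$ has vertex set $\mathbb{Z}_p=\{0,\dots,p-1\}$, and distinct vertices $i,j$ are adjacent iff their cyclic distance $\min(|i-j|,p-|i-j|)$ is strictly less than $k$ (the graph depends on the pair $(p,k)$, e.g. $E_{p/(q-1)}$ uses threshold $q-1$ on $\mathbb{Z}_p$). For a graph $G$, $\overline{\xi_f}(G)$ (complement of the projective rank) is the infimum of $d/r$ over all $d,r\in\mathbb{N}$ for which there is an assignment of $r$-dimensional subspaces $W_v\le\mathbb{C}^d$ to the vertices of $G$ such that distinct non-adjacent vertices receive orthogonal subspaces. *)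

(* Defs.v *)
From HB Require Import structures.
From mathcomp Require Import all_boot all_order all_algebra.
From mathcomp Require Import complex.
From mathcomp Require Import classical_sets reals Rstruct.


Set Implicit Arguments.
Unset Strict Implicit.
Unset Printing Implicit Defensive.

Import Order.TTheory GRing.Theory Num.Theory.
Local Open Scope ring_scope.
Local Open Scope classical_set_scope.

Definition CC : Type := (Rdefinitions.R)[i].

Definition cdist (p : nat) (i j : 'I_p) : nat :=
  let a := if (nat_of_ord i <= nat_of_ord j)%N then (j - i)%N else (i - j)%N in minn a (p - a)%N.

Definition frac_adj (p k : nat) : rel 'I_p :=
  fun i j => (i != j) && (cdist i j < k)%N.

Arguments frac_adj : clear implicits.

(* An orthogonal (d,r)-representation of the complement: an r-dimensional
   subspace W_v of C^d for each vertex (the row space of an r x d matrix of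
   rank r), such that distinct non-adjacent vertices receive orthogonal
   subspaces (w.r.t. the standard Hermitian inner product). *)
Definition orth_rep (n : nat) (adj : rel 'I_n) (d r : nat) : Prop :=
  exists W : 'I_n -> 'M[CC]_(r, d),
    (forall v, \rank (W v) = r) /\
    (forall u v, u != v -> ~~ adj u v ->
       W u *m (map_mx Num.conj (W v))^T = 0).

Definition xi_f_bar (n : nat) (adj : rel 'I_n) : Rdefinitions.R :=
  inf [set x : Rdefinitions.R | exists d r : nat,
         (0 < d)%N /\ (0 < r)%N /\ x = ((d%:R : Rdefinitions.R) / r%:R) /\ orth_rep adj d r].

(* Main.v *)
Require Import Defs.
From HB Require Import structures.
From mathcomp Require Import all_boot all_order all_algebra.
From mathcomp Require Import complex.
From mathcomp Require Import classical_sets reals Rstruct.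
From mathcomp Require Import zify.
Set Implicit Arguments. Unset Strict Implicit.
Import Order.TTheory GRing.Theory Num.Theory.

Lemma modn_small2 x p : x < p + p -> x %% p = if x < p then x else x - p.
Proof.
case: ifP => h1 h2; first by rewrite modn_small.
have -> : x = (x - p) + p by lia.
by rewrite modnDr modn_small; lia.
Qed.

Lemma valSP p (x : 'I_p) : (x.+1 < p /\ nat_of_ord (ordS x) = x.+1) \/ (x.+1 = p /\ nat_of_ord (ordS x) = 0).
Proof. have := ltn_ord x => h. rewrite /ordS /= modn_small2; last lia. case: ifP => ?; [left|right]; lia. Qed.

Ltac cd_tac := rewrite /cdist; repeat match goal with |- context [nat_of_ord (ordS ?z)] => case: (@valSP _ z) => [[? ->]|[? ->]] end; rewrite ?ltn0 ?leq0n /=;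
  repeat (case: ifP => [?|/negbT ?]); lia.

Section S.
Variable p : nat.
Implicit Types x y : 'I_p.

Lemma cdist_sym x y : cdist x y = cdist y x.
Proof. have := ltn_ord x; have := ltn_ord y => ??; cd_tac. Qed.

Lemma cdistSS x y : cdist (ordS x) (ordS y) = cdist x y.
Proof. have := ltn_ord x; have := ltn_ord y => ??; rewrite /cdist; repeat match goal with |- context [nat_of_ord (ordS ?z)] => case: (@valSP _ z) => [[? ->]|[? ->]] end. all: rewrite ?ltn0 ?leq0n /=; repeat (case: ifP => [?|/negbT ?]); lia. Qed.

Lemma cdist_pos_neq x y : 0 < cdist x y -> x != y.
Proof. by apply: contraTneq => ->; rewrite /cdist leqnn subnn min0n. Qed.

Lemma cdist_cap q x y : 2 * q + 2 <= p -> q - 1 <= cdist x y ->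
  q <= cdist x (ordS y) \/ q <= cdist (ordS x) y.
Proof. have := ltn_ord x; have := ltn_ord y => ??; cd_tac. Qed.

Lemma cdist_sum q x y : q.+1 <= cdist x y ->
  q <= cdist x (ordS y) /\ q <= cdist (ordS x) y.
Proof. have := ltn_ord x; have := ltn_ord y => ??; cd_tac. Qed.

Lemma cdist_up q (u v : 'I_p) i j : q <= cdist u v -> i < q -> j < q -> 0 < q ->
  (u + i) %% p != (v + j) %% p.
Proof. have := ltn_ord u; have := ltn_ord v => ?? + ???; rewrite /cdist.
case: ifP => ? H; (rewrite !modn_small2; try lia); repeat (case: ifP => [?|/negbT ?]); lia. Qed.
End S.
Local Open Scope ring_scope.

Definition orth m1 m2 n (A : 'M[CC]_(m1, n)) (B : 'M[CC]_(m2, n)) :=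
  A *m (map_mx Num.conj B)^T = 0.

Lemma orth_sub m1 m2 m3 m4 n (A : 'M[CC]_(m1, n)) (B : 'M[CC]_(m2, n))
  (C : 'M[CC]_(m3, n)) (D : 'M[CC]_(m4, n)) :
  submx C A -> submx D B -> orth A B -> orth C D.
Proof.
move=> /submxP[X ->] /submxP[Y ->]; rewrite /orth => h.
by rewrite map_mxM trmx_mul mulmxA -(mulmxA X) h mulmx0 mul0mx.
Qed.

Lemma orth_col m1 m2 m3 n (A : 'M[CC]_(m1, n)) (B : 'M[CC]_(m2, n)) (C : 'M[CC]_(m3, n)) :
  orth A C -> orth B C -> orth (col_mx A B) C.
Proof. by rewrite /orth mul_col_mx => -> ->; rewrite col_mx0. Qed.

Lemma orth_colr m1 m2 m3 n (A : 'M[CC]_(m1, n)) (B : 'M[CC]_(m2, n)) (C : 'M[CC]_(m3, n)) :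
  orth C A -> orth C B -> orth C (col_mx A B).
Proof. by rewrite /orth map_col_mx tr_col_mx mul_mx_row => -> ->; rewrite row_mx0. Qed.

Lemma orth_addl m1 m2 m3 n (A : 'M[CC]_(m1, n)) (B : 'M[CC]_(m2, n)) (C : 'M[CC]_(m3, n)) :
  orth A C -> orth B C -> orth (A + B)%MS C.
Proof. move=> h1 h2; apply: (orth_sub _ (submx_refl C) (orth_col h1 h2)); by rewrite addsmxE. Qed.

Lemma orth_addr m1 m2 m3 n (A : 'M[CC]_(m1, n)) (B : 'M[CC]_(m2, n)) (C : 'M[CC]_(m3, n)) :
  orth C A -> orth C B -> orth C (A + B)%MS.
Proof. move=> h1 h2; apply: (orth_sub (submx_refl C) _ (orth_colr h1 h2)); by rewrite addsmxE. Qed.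

Lemma orth_block m1 m2 n1 n2 d1 d2 (A : 'M[CC]_(m1, d1)) (B : 'M[CC]_(n1, d1))
  (C : 'M[CC]_(m2, d2)) (D : 'M[CC]_(n2, d2)) :
  orth A B -> orth C D -> orth (block_mx A 0 0 C) (block_mx B 0 0 D).
Proof.
rewrite /orth map_block_mx tr_block_mx mulmx_block => -> ->.
by rewrite !map_mx0 !trmx0 !mulmx0 !mul0mx !addr0 block_mx0.
Qed.

Section BD.
Variable d : nat.
Fixpoint bdsz (k : nat) : nat := if k is k'.+1 then (d + bdsz k')%N else 0%N.
Fixpoint bd (F : nat -> 'M[CC]_d) (k : nat) : 'M[CC]_(bdsz k) :=
  match k return 'M[CC]_(bdsz k) with
  | 0 => 0
  | k'.+1 => block_mx (F k') 0 0 (bd F k')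
  end.

Lemma bdszE k : bdsz k = (k * d)%N.
Proof. elim: k => //= k ->; lia. Qed.

Lemma rank_bd F k : \rank (bd F k) = (\sum_(i < k) \rank (F i))%N.
Proof.
elim: k => [|k IH] /=; first by rewrite big_ord0 mxrank0.
by rewrite rank_diag_block_mx IH big_ord_recr /= addnC.
Qed.

Lemma orth_bd F G k : (forall i, (i < k)%N -> orth (F i) (G i)) -> orth (bd F k) (bd G k).
Proof.
elim: k => [|k IH] /= h; first by rewrite /orth mul0mx.
apply: orth_block; first exact: h.
by apply: IH => i hi; apply: h; lia.
Qed.
End BD.

Lemma rep_of n (adj : rel 'I_n) N (M : 'I_n -> 'M[CC]_N) s :
  (forall v, \rank (M v) = s) ->
  (forall u v, u != v -> ~~ adj u v -> orth (M u) (M v)) -> orth_rep adj N s.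
Proof.
move=> hr ho.
pose W v := castmx (hr v, erefl N) (row_base (M v)).
have sW v : submx (W v) (M v) by rewrite /W eqmx_cast eq_row_base.
exists W; split.
  by move=> v; rewrite /W eqmx_cast eq_row_base hr.
move=> u v huv ha; exact: (orth_sub (sW u) (sW v) (ho u v huv ha)).
Qed.

Lemma iterSE p (v : 'I_p) k : nat_of_ord (iter k (@ordS p) v) = ((v + k) %% p)%N.
Proof.
elim: k => [|k IH] /=; first by rewrite addn0 modn_small.
by rewrite IH addnS -addn1 modnDml addn1.
Qed.

Lemma iter_inj p (v : 'I_p) : injective (fun k : 'I_p => iter k (@ordS p) v).
Proof.
move=> a b /(congr1 val) /=; rewrite !iterSE.
have := ltn_ord a; have := ltn_ord b; have := ltn_ord v => ???.
rewrite !modn_small2; try lia.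
move=> h; apply: val_inj => /=; move: h; repeat (case: ifP => [?|/negbT ?]); lia.
Qed.

Lemma sum_iter p (v : 'I_p) (f : 'I_p -> nat) :
  (\sum_(k < p) f (iter k (@ordS p) v) = \sum_x f x)%N.
Proof. by rewrite [RHS](reindex_inj (@iter_inj _ v)). Qed.

Lemma cdist_iter p k (x y : 'I_p) : cdist (iter k (@ordS p) x) (iter k (@ordS p) y) = cdist x y.
Proof. by elim: k => //= k IH; rewrite cdistSS. Qed.

Lemma lower_nat p q d r : (2 <= q)%N -> (2 * q + 2 <= p)%N -> orth_rep (frac_adj p q) d r ->
  exists S1 S2, (S1 + S2 = 2 * p * r)%N /\
   ((0 < S1)%N -> orth_rep (frac_adj p (q - 1)) (p * d) S1) /\
   ((0 < S2)%N -> orth_rep (frac_adj p (q + 1)) (p * d) S2).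
Proof.
move=> hq hp [W [hr ho]].
have ho' : forall x y : 'I_p, (q <= cdist x y)%N -> orth (W x) (W y).
  move=> x y h; apply: ho; first by apply: cdist_pos_neq; lia.
  by rewrite /frac_adj ltnNge h andbF.
pose Uc x := (W x :&: W (ordS x))%MS.
pose Us x := (W x + W (ordS x))%MS.
exists (\sum_x \rank (Uc x))%N, (\sum_x \rank (Us x))%N.
split.
  rewrite -big_split /=.
  under eq_bigr => x _ do rewrite addnC mxrank_sum_cap !hr.
  rewrite sum_nat_const card_ord; lia.
split => _; rewrite -(bdszE d p).
- apply: (@rep_of _ _ _ (fun v => bd (fun i => Uc (iter i (@ordS p) v)) p)).
    by move=> v; rewrite rank_bd (sum_iter v (fun x => \rank (Uc x))).
  move=> u v huv; rewrite /frac_adj huv /= -leqNgt => h.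
  apply: orth_bd => i _.
  have : (q - 1 <= cdist (iter i (@ordS p) u) (iter i (@ordS p) v))%N by rewrite cdist_iter.
  case/(cdist_cap hp) => h'.
  + by apply: (orth_sub (capmxSl _ _) (capmxSr _ _)); apply: ho'.
  + by apply: (orth_sub (capmxSr _ _) (capmxSl _ _)); apply: ho'.
- apply: (@rep_of _ _ _ (fun v => bd (fun i => Us (iter i (@ordS p) v)) p)).
    by move=> v; rewrite rank_bd (sum_iter v (fun x => \rank (Us x))).
  move=> u v huv; rewrite /frac_adj huv /= -leqNgt => h.
  apply: orth_bd => i _.
  have h0 : (q.+1 <= cdist (iter i (@ordS p) u) (iter i (@ordS p) v))%N by rewrite cdist_iter; lia.
  have [h1 h2] := cdist_sum h0.
  have h3 := h0; rewrite -cdistSS in h3.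
  apply: orth_addl; apply: orth_addr; apply: ho' => //; lia.
Qed.

Lemma sum_ind p a b : (a < p)%N ->
  \sum_(k < p) ((k == a :> nat)%:R * (k == b :> nat)%:R : CC) = (a == b)%:R.
Proof.
move=> ha; rewrite (bigD1 (Ordinal ha)) //= eqxx mul1r big1 ?addr0 // => k hk.
rewrite (_ : (k == a :> nat) = false) ?mul0r //; apply/negbTE.
by move: hk; apply: contra => /eqP h; apply/eqP/val_inj.
Qed.

Definition Wup p q (v : 'I_p) : 'M[CC]_(q, p) :=
  \matrix_(i < q, j < p) ((nat_of_ord j == ((v + i) %% p)%N)%:R : CC).

Lemma Wprod p q (u v : 'I_p) : (0 < p)%N ->
  Wup q u *m (map_mx Num.conj (Wup q v))^T = \matrix_(i < q, j < q) ((((u + i) %% p)%N == ((v + j) %% p)%N)%:R).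
Proof.
move=> hp; apply/matrixP => i j; rewrite !mxE.
under eq_bigr => k _ do rewrite !mxE conjC_nat.
by rewrite sum_ind // ltn_pmod.
Qed.

Lemma up_rep p q : (0 < q)%N -> (2 * q <= p)%N -> orth_rep (frac_adj p q) p q.
Proof.
move=> hq hqp; have hp : (0 < p)%N by lia.
exists (@Wup p q); split.
  move=> v; apply/eqP; rewrite eqn_leq rank_leq_row /=.
  have h1 : (1%:M : 'M[CC]_q) = Wup q v *m (map_mx Num.conj (Wup q v))^T.
    rewrite Wprod //; apply/matrixP => i j; rewrite !mxE; congr (_%:R); congr (nat_of_bool _).
    have := ltn_ord i; have := ltn_ord j; have := ltn_ord v => ???.
    apply/idP/idP => [/eqP -> //|].
    rewrite !modn_small2; try lia.
    move/eqP => h; apply/eqP/val_inj => /=; move: h; repeat (case: ifP => [?|/negbT ?]); lia.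
  apply: (leq_trans _ (mxrankM_maxl _ (map_mx Num.conj (Wup q v))^T)).
  by rewrite -h1 mxrank1.
move=> u v huv; rewrite /frac_adj huv /= -leqNgt => h.
rewrite /orth Wprod //; apply/matrixP => i j; rewrite !mxE.
by rewrite (negbTE (cdist_up h (ltn_ord i) (ltn_ord j) hq)).
Qed.

Local Notation RR := Rdefinitions.R.

Lemma frac_le (a b c e : nat) : (0 < b)%N -> (0 < e)%N ->
  (a%:R / b%:R <= c%:R / e%:R :> RR) = (a * e <= c * b)%N.
Proof.
move=> hb he.
rewrite ler_pdivrMr ?ltr0n // mulrAC ler_pdivlMr ?ltr0n // -!natrM ler_nat //.
Qed.

Lemma xi_le n (adj : rel 'I_n) d r : (0 < d)%N -> (0 < r)%N -> orth_rep adj d r ->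
  xi_f_bar adj <= d%:R / r%:R.
Proof.
move=> hd hr hrep; apply: ge_inf; last by exists d, r.
exists 0 => x [d' [r' [_ [_ [-> _]]]]]; exact: divr_ge0.
Qed.

Lemma xi_ge n (adj : rel 'I_n) c : (exists d r, (0 < d)%N /\ (0 < r)%N /\ orth_rep adj d r) ->
  (forall d r, (0 < d)%N -> (0 < r)%N -> orth_rep adj d r -> c <= d%:R / r%:R) ->
  c <= xi_f_bar adj.
Proof.
move=> [d [r [hd [hr hrep]]]] h; apply: lb_le_inf; first by exists (d%:R / r%:R), d, r.
by move=> x [d' [r' [hd' [hr' [-> hrep']]]]]; apply: h.
Qed.

Unset Implicit Arguments.

Theorem lemma17 (p q : nat) :
  (2 <= q)%N -> (2 * (q + 1)%N <= p)%N ->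
  xi_f_bar (frac_adj p (q - 1)%N) = p%:R / (q - 1)%N%:R ->
  xi_f_bar (frac_adj p (q + 1)%N) = p%:R / (q + 1)%N%:R ->
  xi_f_bar (frac_adj p q) = p%:R / q%:R :> Rdefinitions.R.
Proof.
move=> hq hp hm hP.
have hup := @up_rep p q ltac:(lia) ltac:(lia).
apply: le_anti; apply/andP; split.
  by apply: xi_le => //; lia.
apply: xi_ge; first by exists p, q; split; [lia|split; [lia|]].
move=> d r hd hr hrep; rewrite frac_le //; last lia.
have hp2 : (2 * q + 2 <= p)%N by lia.
have [S1 [S2 [hS [h1 h2]]]] := lower_nat hq hp2 hrep.
have hpd : (0 < p * d)%N by rewrite muln_gt0 hd; lia.
have e1 : (S1 <= d * (q - 1))%N.
  case: (posnP S1) => [->|pos]; first done.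
  have := xi_le hpd pos (h1 pos); rewrite hm frac_le //; last lia.
  by rewrite -mulnA leq_pmul2l //; lia.
have e2 : (S2 <= d * (q + 1))%N.
  case: (posnP S2) => [->|pos]; first done.
  have := xi_le hpd pos (h2 pos); rewrite hP frac_le //; last lia.
  by rewrite -mulnA leq_pmul2l //; lia.
have e3 : (d * (q - 1) + d * (q + 1) = 2 * (d * q))%N by rewrite -mulnDr; nia.
nia.
Qed.
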